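(* Fix $p\in(0,1)$, $q=1-p$, and for $0\le k\le n$ let $w_{n,k}:=\frac{(n)_k}{n^k}q^{k(k+1)/2}$ with $(n)_k=n(n-1)\cdots(n-k+1)$ and $w_{n,0}=1$. Let $\nu_n$ be the stationary law of the careless count chain. There exist constants $0<c_p<C_p<\infty$ and an integer $M_p<\infty$ such that for all sufficiently large $n$ and all $M_p\le k\le n$, $c_pw_{n,k}\le\nu_n(k)\le C_pw_{n,k}$. In particular $\nu_n(n)=\Theta_p\!\left(\frac{n!}{n^n}q^{n(n+1)/2}\right)$.
   Context: The careless count chain $(K_t)$ on $\{0,\dots,n\}$: given $K_t=k$, with probability $k/n$ one has $K_{t+1}\sim\mathrm{Bin}(k,q)$, and with probability $(n-k)/n$ one has $K_{t+1}\sim\mathrm{Bin}(k+1,q)$. It is irreducible and aperiodic with unique stationary law $\nu_n$. $\Theta_p(\cdot)$ means bounded above and below by positive constants depending only on $p$. *)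

(* Defs.v *)
From Stdlib Require Import Reals Arith Lia.
Open Scope R_scope.

Definition binpmf (m : nat) (q : R) (i : nat) : R :=
  if (i <=? m)%nat then C m i * q ^ i * (1 - q) ^ (m - i) else 0.

Definition careless_P (n : nat) (q : R) (k j : nat) : R :=
  INR k / INR n * binpmf k q j + INR (n - k) / INR n * binpmf (S k) q j.

Definition careless_stationary (n : nat) (q : R) (nu : nat -> R) : Prop :=
  (forall k, (k <= n)%nat -> 0 <= nu k) /\
  sum_f_R0 nu n = 1 /\
  (forall j, (j <= n)%nat -> nu j = sum_f_R0 (fun k => nu k * careless_P n q k j) n).

Fixpoint falling (n k : nat) : R :=
  match k with
  | O => 1
  | S k' => falling n k' * (INR n - INR k')
  end.

Definition wnk (q : R) (n k : nat) : R :=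
  falling n k / INR n ^ k * q ^ (k * (k + 1) / 2).

(* Main.v *)
Require Import Defs.
From Stdlib Require Import Reals Lia Lra.
From mathcomp Require all_boot all_order all_algebra Rstruct zify ring lra.

Module Aux.
From Stdlib Require Import Reals Lia Lra.
From mathcomp Require Import all_boot all_order all_algebra.
From mathcomp Require Import Rstruct.
From mathcomp Require Import zify ring lra.
Import Order.TTheory GRing.Theory Num.Theory.

Section SA.
Local Open Scope ring_scope.

Lemma trinom (a j m : nat) : (m <= j)%N -> (j <= a)%N ->
  ('C(a, j) * 'C(j, m) = 'C(a, m) * 'C(a - m, j - m))%N.
Proof.
move=> hmj hja.
have h1 := bin_fact hmj. have h2 := bin_fact hja. have h3 := bin_fact (leq_trans hmj hja).
have hjm : (j - m <= a - m)%N by lia.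
have h4 := bin_fact hjm.
have e : (a - m - (j - m) = a - j)%N by lia.
rewrite e in h4.
apply/eqP; rewrite -(@eqn_pmul2r (m`! * (j - m)`! * (a - j)`!)); last by rewrite !muln_gt0 !fact_gt0.
apply/eqP.
transitivity (a`!).
  by rewrite -h2 -h1; ring.
by rewrite -h3 -h4; ring.
Qed.

End SA.

Section SB.
Local Open Scope ring_scope.

Lemma CE n k : (k <= n)%N -> C n k = ('C(n,k))%:R.
Proof.
move=> hk; rewrite /C !RealsE -(bin_fact hk) natrM. change ((n-k)%coq_nat) with (n-k)%N. rewrite [(_ * _)%:R]natrM mulfK //.
by rewrite mulf_neq0 // pnatr_eq0 -lt0n fact_gt0.
Qed.

Lemma binpmfE m (q : R) i : binpmf m q i = ('C(m,i))%:R * q^+i * (1-q)^+(m-i).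
Proof.
rewrite /binpmf; destruct (Nat.leb_spec i m) as [h|h].
  rewrite CE; last by apply/ssrnat.leP. by rewrite !RealsE.
by rewrite bin_small ?mul0r //; apply/ssrnat.ltP; lia.
Qed.

End SB.

Section SC.
Local Open Scope ring_scope.

Lemma sum_trunc (F : nat -> R) a b N : (a <= b)%N -> (b <= N)%N ->
  (forall j, (b <= j)%N -> (j < N)%N -> F j = 0) ->
  \sum_(a <= j < N) F j = \sum_(a <= j < b) F j.
Proof.
move=> hab hbN h0; rewrite (big_cat_nat hab hbN) /=.
rewrite [X in _ + X](_ : _ = 0) ?addr0 //.
rewrite big_nat_cond big1 // => j /andP[/andP[h1 h2] _]; exact: h0.
Qed.

Lemma sum_ltrunc (F : nat -> R) a b N : (a <= b)%N -> (b <= N)%N ->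
  (forall j, (a <= j)%N -> (j < b)%N -> F j = 0) ->
  \sum_(a <= j < N) F j = \sum_(b <= j < N) F j.
Proof.
move=> hab hbN h0; rewrite (big_cat_nat hab hbN) /=.
rewrite [X in X + _](_ : _ = 0) ?add0r //.
rewrite big_nat_cond big1 // => j /andP[/andP[h1 h2] _]; exact: h0.
Qed.

Lemma binom1 (N : nat) (x y : R) :
  \sum_(0 <= i < N.+1) ('C(N,i))%:R * y^+i * x^+(N-i) = (x+y)^+N.
Proof.
rewrite exprDn big_mkord; apply: eq_bigr => i _.
by rewrite -mulr_natl; ring.
Qed.

Lemma binmom a m N (q : R) : (a < N)%N ->
  \sum_(0 <= j < N) ('C(a,j))%:R * q^+j * (1-q)^+(a-j) * ('C(j,m))%:R
  = ('C(a,m))%:R * q^+m.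
Proof.
move=> haN.
rewrite (@sum_trunc _ 0 a.+1 N) //; last first.
  by move=> j hj _; rewrite bin_small ?mul0r.
case: (leqP m a) => hma; last first.
  rewrite bin_small // mul0r big_nat_cond big1 // => j /andP[/andP[_ hj] _].
  by rewrite (@bin_small j m) ?mulr0 //; lia.
have hma1 : (m <= a.+1)%N by lia.
rewrite (@sum_ltrunc _ 0 m a.+1) //; last first.
  by move=> j _ hj; rewrite (@bin_small j m) ?mulr0.
have hh := big_addn 0 a.+1 m xpredT (fun j => (('C(a,j))%:R * q^+j * (1-q)^+(a-j) * ('C(j,m))%:R)). rewrite add0n in hh. rewrite hh.
have -> : (a.+1 - m = (a - m).+1)%N by lia.
have -> : ('C(a, m))%:R * q ^+ m = ('C(a,m))%:R * q^+m * ((1 - q) + q)^+(a-m).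
  by rewrite subrK expr1n mulr1.
rewrite -binom1 big_distrr /=.
rewrite !big_nat; apply: eq_bigr => i /andP[_ hi].
have hle : (i + m <= a)%N by lia.

have := trinom a (i+m) m (leq_addl i m) hle.
move=> e.
have e2 : ('C(a, i + m) * 'C(i + m, m))%:R = ('C(a, m))%:R * ('C(a - m, i))%:R :> R.
  by rewrite e natrM; congr (_ * _); rewrite addnK.
have e3 : (a - (i + m) = a - m - i)%N by lia.
rewrite exprD e3.
transitivity (('C(a, i + m) * 'C(i + m, m))%:R * q ^+ i * q ^+ m * (1 - q) ^+ (a - m - i)).
  rewrite natrM; ring.
rewrite e2; ring.
Qed.

End SC.

Section SD.
Local Open Scope ring_scope.

Lemma sum_shift (F : nat -> R) k N :
  \sum_(k <= m < N) F m = \sum_(0 <= i < N - k) F (i + k).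
Proof. by rewrite -{1}[k]add0n big_addn. Qed.

Lemma inv_id j k n : (j <= n)%N ->
  \sum_(k <= m < n.+1) (-1)^+(m-k) * ('C(m,k))%:R * ('C(j,m))%:R
  = ((j == k) : nat)%:R :> R.
Proof.
move=> hjn.
case: (ltnP j k) => hjk.
  rewrite (_ : j == k = false); last by apply/eqP; lia.
  rewrite big_nat_cond big1 // => m /andP[/andP[hm _] _].
  by rewrite (@bin_small j m) ?mulr0 //; lia.
have hkj1 : (k <= j.+1)%N by lia.
rewrite (@sum_trunc _ k j.+1 n.+1) //; last first.
  by move=> m hm _; rewrite (@bin_small j m) ?mulr0.
rewrite sum_shift.
have -> : (j.+1 - k = (j - k).+1)%N by lia.
transitivity ((('C(j,k))%:R * \sum_(0 <= i < (j - k).+1) ('C(j - k,i))%:R * (-1)^+i * 1^+(j-k-i))%R : R).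
  rewrite big_distrr /= !big_nat; apply: eq_bigr => i /andP[_ hi].
  have hle : (i + k <= j)%N by lia.
  have := trinom j (i+k) k (leq_addl i k) hle.
  rewrite addnK => e.
  rewrite expr1n mulr1. have -> : (i + k)%R = (i + k)%N by [].
  transitivity (((-1)^+i * ('C(j, (i + k)%N) * 'C((i + k)%N, k))%:R)%R : R).
    rewrite natrM; ring.
  rewrite e natrM; ring.
rewrite binom1 addrN expr0n.
case: (eqVneq j k) => [->|hne].
  by rewrite subnn /= binn mulr1.
have -> : (j - k == 0)%N = false by apply/eqP; lia.
by rewrite mulr0.
Qed.

End SD.

Section SE.
Local Open Scope ring_scope.

Definition Fm (nu : nat -> R) n m := \sum_(0 <= j < n.+1) nu j * ('C(j,m))%:R.

Lemma sum_delta (nu : nat -> R) n k : (k <= n)%N ->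
  \sum_(0 <= j < n.+1) nu j * ((j == k) : nat)%:R = nu k.
Proof.
move=> hk.
have h0 : (0 <= k)%N by [].
have h2 : (k <= n.+1)%N by lia.
rewrite (big_cat_nat h0 h2) /=.
rewrite (@big_ltn _ _ _ k n.+1); last by lia.
rewrite eqxx mulr1.
rewrite [X in X + _](_ : _ = 0); last first.
  rewrite big_nat_cond big1 // => j /andP[/andP[_ hj] _].
  by rewrite (_ : j == k = false) ?mulr0 //; apply/eqP; lia.
rewrite [X in _ + (_ + X)](_ : _ = 0); last first.
  rewrite big_nat_cond big1 // => j /andP[/andP[hj _] _].
  by rewrite (_ : j == k = false) ?mulr0 //; apply/eqP; lia.
by rewrite add0r addr0.
Qed.

Lemma nu_inv (nu : nat -> R) n k : (k <= n)%N ->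
  nu k = \sum_(k <= m < n.+1) (-1)^+(m-k) * ('C(m,k))%:R * Fm nu n m.
Proof.
move=> hk.
rewrite /Fm.
under eq_bigr => m _ do rewrite big_distrr.
rewrite exchange_big_nat /=.
rewrite -{1}(@sum_delta nu n k hk).
rewrite !big_nat; apply: eq_bigr => j /andP[_ hj].
have hjn : (j <= n)%N by lia.
rewrite -(@inv_id j k n hjn).
rewrite big_distrr /= !big_nat; apply: eq_bigr => m _.
ring.
Qed.

End SE.

Section SF.
Local Open Scope ring_scope.

Lemma PE n (q : R) k j : careless_P n q k j =
  k%:R / n%:R * (('C(k,j))%:R * q^+j * (1-q)^+(k-j))
  + (n - k)%:R / n%:R * (('C(k.+1,j))%:R * q^+j * (1-q)^+(k.+1-j)).
Proof. by rewrite /careless_P !binpmfE !RealsE. Qed.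

Lemma Pmom n (q : R) k m : (0 < n)%N -> (k <= n)%N ->
  \sum_(0 <= j < n.+1) careless_P n q k j * ('C(j,m))%:R
  = q^+m / n%:R * (k%:R * ('C(k,m))%:R + (n-k)%:R * ('C(k.+1,m))%:R).
Proof.
move=> hn hk.
under eq_bigr => j _ do rewrite PE mulrDl.
rewrite big_split /=.
have e1 : \sum_(0 <= j < n.+1) k%:R / n%:R * (('C(k,j))%:R * q^+j * (1-q)^+(k-j)) * ('C(j,m))%:R
  = k%:R / n%:R * \sum_(0 <= j < n.+1) ('C(k,j))%:R * q^+j * (1-q)^+(k-j) * ('C(j,m))%:R.
  by rewrite big_distrr /=; apply: eq_bigr => j _; ring.
have e2 : \sum_(0 <= j < n.+1) (n-k)%:R / n%:R * (('C(k.+1,j))%:R * q^+j * (1-q)^+(k.+1-j)) * ('C(j,m))%:R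
  = (n-k)%:R / n%:R * \sum_(0 <= j < n.+1) ('C(k.+1,j))%:R * q^+j * (1-q)^+(k.+1-j) * ('C(j,m))%:R.
  by rewrite big_distrr /=; apply: eq_bigr => j _; ring.
rewrite e1 e2 binmom; last by lia.
case: (ltnP k n) => hkn.
  rewrite binmom; last by lia.
  by rewrite /=; ring.
have -> : (n - k = 0)%N by lia.
by rewrite !mul0r; ring.
Qed.

Lemma natid n k m : (k <= n)%N -> (m < n)%N ->
  (k * 'C(k,m.+1) + (n-k) * 'C(k.+1,m.+1) = (n - m.+1) * 'C(k,m.+1) + (n-m) * 'C(k,m))%N.
Proof.
move=> hk hm.
rewrite binS.
case: (ltnP k m) => hkm.
  by rewrite !(@bin_small k) //; lia.
have := mul_bin_left k m.
set X := 'C(k, m.+1); set Y := 'C(k, m) => hXY.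
nia.
Qed.

End SF.

Section SG.
Local Open Scope ring_scope.

Lemma Frec (nu : nat -> R) n (q : R) m : (0 < n)%N -> (m < n)%N ->
  (forall j, (j <= n)%N -> nu j = \sum_(0 <= k < n.+1) nu k * careless_P n q k j) ->
  n%:R * Fm nu n m.+1 = q^+m.+1 * ((n - m.+1)%:R * Fm nu n m.+1 + (n-m)%:R * Fm nu n m).
Proof.
move=> hn hm st.
have hn0 : n%:R != 0 :> R by rewrite pnatr_eq0 -lt0n.
rewrite {1}/Fm.
transitivity (n%:R * \sum_(0 <= j < n.+1) (\sum_(0 <= k < n.+1) nu k * careless_P n q k j) * ('C(j,m.+1))%:R).
  congr (_ * _); rewrite !big_nat; apply: eq_bigr => j /andP[_ hj].
  by rewrite -st //; lia.
under eq_bigr => j _ do rewrite big_distrl.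
rewrite exchange_big_nat /=.
transitivity (n%:R * \sum_(0 <= k < n.+1) nu k * (\sum_(0 <= j < n.+1) careless_P n q k j * ('C(j,m.+1))%:R)).
  congr (_ * _); apply: eq_bigr => k _; rewrite big_distrr /=; apply: eq_bigr => j _; ring.
transitivity (n%:R * \sum_(0 <= k < n.+1) nu k * (q^+m.+1 / n%:R * ((n - m.+1)%:R * ('C(k,m.+1))%:R + (n-m)%:R * ('C(k,m))%:R))).
  congr (_ * _); rewrite !big_nat; apply: eq_bigr => k /andP[_ hk].
  have hk2 : (k <= n)%N by lia.
  rewrite Pmom //.
  congr (_ * (_ * _)).
  by rewrite -!natrM -!natrD natid //; lia.
rewrite /Fm big_distrr /= !big_distrr /= -big_split /= big_distrr /=.
apply: eq_bigr => k _.
by field.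
Qed.

End SG.

Section SH.
Local Open Scope ring_scope.

Fixpoint Pq (q : R) (m : nat) : R :=
  match m with O => 1 | S m' => Pq q m' * (1 - q^+(m'.+1)) end.

Lemma Pq_ge0 (q : R) m : 0 <= q -> q < 1 -> 0 < Pq q m.
Proof.
move=> h0 h1; elim: m => [|m IH] /=; first exact: ltr01.
apply: mulr_gt0 => //.
have : q^+m.+1 < 1 by rewrite exprn_ilt1 //.
by move=> h; rewrite subr_gt0.
Qed.

Variables (n : nat) (q : R) (F w : nat -> R).
Hypotheses (hn : (0 < n)%N) (hq0 : 0 < q) (hq1 : q < 1) (hF0 : F 0 = 1)
  (hFpos : forall m, 0 <= F m) (hw0 : w 0 = 1)
  (hrec : forall m, (m < n)%N -> n%:R * F m.+1 = q^+m.+1 * ((n - m.+1)%:R * F m.+1 + (n-m)%:R * F m))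
  (hwS : forall m, (m < n)%N -> n%:R * w m.+1 = (n-m)%:R * q^+m.+1 * w m).

Lemma keyeq m : (m < n)%N ->
  F m.+1 * (n%:R - q^+m.+1 * (n - m.+1)%:R) = q^+m.+1 * (n-m)%:R * F m.
Proof. move=> hm; have e := hrec _ hm. apply: (@addIr _ (q ^+ m.+1 * (n - m.+1)%:R * F m.+1)). rewrite mulrBr. rewrite [LHS](_ : _ = n%:R * F m.+1); last by ring. rewrite e; ring. Qed.

Lemma qpow_bounds k : 0 < q^+k.+1 /\ q^+k.+1 < 1.
Proof. split; [exact: exprn_gt0 | by rewrite (exprn_ilt1 _ (ltW hq0) hq1)]. Qed.

Lemma lowerF m : (m <= n)%N -> w m <= F m.
Proof.
elim: m => [|m IH] hm; first by rewrite hF0 hw0.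
have hmn : (m < n)%N by lia.
have IH' := IH (ltnW hm).
have e := keyeq _ hmn. have e2 := hwS _ hmn.
have [qa qb] := qpow_bounds m.
have hnm : (n - m.+1)%:R <= n%:R :> R by rewrite ler_nat; lia.
have hnm0 : 0 <= (n - m.+1)%:R :> R by [].
have hnm1 : 0 <= (n - m)%:R :> R by [].
have hn' : 0 < n%:R :> R by rewrite ltr0n.
have HF := hFpos m.+1.
set x := q^+m.+1 in e e2 qa qb *.
set a := (n - m.+1)%:R in e hnm hnm0 *.
set b := (n - m)%:R in e e2 hnm1 *.
set N := n%:R in e e2 hnm hn' *.
have h1 : N * w m.+1 <= N * F m.+1.
  rewrite e2.
  have hxa := mulr_ge0 (mulr_ge0 (ltW qa) hnm0) HF.
  have : F m.+1 * (N - x * a) <= N * F m.+1 by nra.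
  have : b * x * w m <= x * b * F m.
    have hbx := mulr_ge0 hnm1 (ltW qa). have hh := ler_wpM2l hbx IH'. nra.
  lra.
by rewrite ler_pM2l in h1.
Qed.

Lemma upperF m : (m <= n)%N -> F m * Pq q m <= w m.
Proof.
elim: m => [|m IH] hm; first by rewrite hF0 hw0 /= mulr1.
have hmn : (m < n)%N by lia.
have IH' := IH (ltnW hm).
have e := keyeq _ hmn. have e2 := hwS _ hmn.
have [qa qb] := qpow_bounds m.
have hnm : (n - m.+1)%:R <= n%:R :> R by rewrite ler_nat; lia.
have hnm0 : 0 <= (n - m.+1)%:R :> R by [].
have hnm1 : 0 <= (n - m)%:R :> R by [].
have hn' : 0 < n%:R :> R by rewrite ltr0n.
have HF := hFpos m.+1.
have HP := @Pq_ge0 q m (ltW hq0) hq1.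
rewrite /=.
set P := Pq q m in IH' HP *.
set x := q^+m.+1 in e e2 qa qb *.
set a := (n - m.+1)%:R in e hnm hnm0 *.
set b := (n - m)%:R in e e2 hnm1 *.
set N := n%:R in e e2 hnm hn' *.
have h1 : N * (F m.+1 * (P * (1 - x))) <= N * w m.+1.
  rewrite e2.
  have hNa : 0 <= N - a by lra.
  have hh := mulr_ge0 (mulr_ge0 (ltW qa) HF) hNa.
  have h3 : N * (1 - x) * F m.+1 <= F m.+1 * (N - x * a) by nra.
  have h3' : N * (1 - x) * F m.+1 <= b * x * F m by rewrite (mulrC b x) -e.
  have h4 : N * (1 - x) * F m.+1 * P <= b * x * F m * P by exact: (ler_wpM2r (ltW HP) h3').
  have hbx := mulr_ge0 hnm1 (ltW qa).
  have h5 : b * x * (F m * P) <= b * x * w m by exact: (ler_wpM2l hbx IH').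
  have -> : N * (F m.+1 * (P * (1 - x))) = N * (1 - x) * F m.+1 * P by ring.
  lra.
by rewrite ler_pM2l in h1.
Qed.

Lemma ratioF m : (m < n)%N -> (1 - q) * F m.+1 <= q^+m.+1 * F m.
Proof.
move=> hmn.
have e := keyeq _ hmn.
have [qa qb] := qpow_bounds m.
have hnm : (n - m.+1)%:R <= n%:R :> R by rewrite ler_nat; lia.
have hnm1 : (n - m)%:R <= n%:R :> R by rewrite ler_nat; lia.
have hn' : 0 < n%:R :> R by rewrite ltr0n.
have HF := hFpos m.+1.
have HF0 := hFpos m.
have hqq : q ^+ m.+1 <= q.
  rewrite exprSr; apply: ler_piMl; [exact: ltW | exact: exprn_ile1 (ltW hq0) (ltW hq1)].
have hnm0 : 0 <= (n - m.+1)%:R :> R by [].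
set x := q^+m.+1 in e qa qb hqq *.
set a := (n - m.+1)%:R in e hnm hnm0 *.
set b := (n - m)%:R in e hnm1 *.
set N := n%:R in e hnm hnm1 hn' *.
have h1 : N * ((1 - q) * F m.+1) <= N * (x * F m).
  have hxa : x * a <= q * N := ler_pM (ltW qa) hnm0 hqq hnm.
  have h3 := ler_wpM2r HF hxa.
  have h4 : x * b * F m <= x * N * F m.
    apply: ler_wpM2r => //; apply: ler_wpM2l => //; exact: ltW.
  have h5 : F m.+1 * (N - x * a) = x * b * F m by rewrite e.
  have -> : N * (x * F m) = x * N * F m by ring.
  nra.
by rewrite ler_pM2l in h1.
Qed.

End SH.

Section SI.
Local Open Scope ring_scope.

Lemma sign_bound (i : nat) (y : R) : 0 <= y -> - y <= (-1)^+i * y <= y.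
Proof.
move=> hy; rewrite -signr_odd; case: (odd i); rewrite ?expr1 ?expr0; lra.
Qed.

Lemma alt_str (t : nat -> R) L : 0 <= t 0 ->
  (forall i, (i < L)%N -> 0 <= t i.+1 /\ 3 * t i.+1 <= t i) ->
  t 0 / 2 + t L / 2 <= \sum_(0 <= i < L.+1) (-1)^+i * t i <= 3 * t 0 / 2 - t L / 2
  /\ 0 <= t L.
Proof.
move=> h0; elim: L => [|L IH] h.
  rewrite big_nat1 expr0 mul1r; split => //; lra.
have [/andP[IH1 IH2] IH3] := IH (fun i hi => h i (ltnW (hi : (i.+1 < L.+1)%N))).
have [h1 h2] := h L (ltnSn L).
rewrite big_nat_recr //=.
have := @sign_bound L.+1 _ h1.
move=> /andP[s1 s2].
split; last by [].
apply/andP; split; lra.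
Qed.

Lemma alt (t : nat -> R) L : 0 <= t 0 ->
  (forall i, (i < L)%N -> 0 <= t i.+1 /\ 3 * t i.+1 <= t i) ->
  t 0 / 2 <= \sum_(0 <= i < L.+1) (-1)^+i * t i <= 3 * t 0 / 2.
Proof.
move=> h0 h; have [/andP[a b] c] := @alt_str t L h0 h.
apply/andP; split; lra.
Qed.

End SI.

Section SJ.
Local Open Scope ring_scope.

Lemma bern (h : R) k : 0 <= h ->
  1 + k%:R * h + k%:R * (k%:R - 1) / 2 * h^+2 <= (1 + h)^+k.
Proof.
move=> hh; elim: k => [|k IH]; first by rewrite expr0; lra.
rewrite (exprS (1 + h)) -natr1.
have hk : 0 <= k%:R * (k%:R - 1) :> R.
  case: k {IH} => [|k]; first by rewrite mul0r.
  by rewrite mulr_ge0 // -natr1 addrK.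
have h1 : 0 <= 1 + h by lra.
have := ler_wpM2l h1 IH.
have h3 : 0 <= k%:R * (k%:R - 1) / 2 * h^+3.
  by apply: mulr_ge0; [apply: mulr_ge0 => //; lra| exact: exprn_ge0].
move=> H.
rewrite !expr2 in H *.
rewrite exprS expr2 in h3.
nra.
Qed.

Lemma smallM (q eps : R) : 0 < q -> q < 1 -> 0 < eps ->
  exists M : nat, forall k, (M <= k)%N -> k.+1%:R * q^+k.+1 <= eps.
Proof.
move=> hq0 hq1 he.
set h := (1 - q) / q.
have hh : 0 < h by apply: divr_gt0; lra.
have hqh : q * (1 + h) = 1 by rewrite /h; field; lra.
have [N0 HN0] := INR_unbounded (2 / (eps * h^+2)).
exists N0.+1 => k hk.
have HN : 2 / (eps * h^+2) < k%:R.
  move/RltP: HN0; rewrite INRE => HN0.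
  apply: (lt_le_trans HN0); rewrite ler_nat; lia.
have hk0 : 0 < k%:R :> R by rewrite ltr0n; lia.
have heh : 0 < eps * h^+2 by apply: mulr_gt0 => //; exact: exprn_gt0.
have H2 : 2 < eps * h^+2 * k%:R.
  by rewrite -ltr_pdivrMl // mulrC.
have B := @bern h k.+1 (ltW hh).
set Y := (1 + h)^+k.+1 in B.
set X := q^+k.+1.
have XY : X * Y = 1 by rewrite /X /Y -exprMn hqh expr1n.
have hX : 0 < X by exact: exprn_gt0.
have hY : k.+1%:R <= eps * Y.
  rewrite -natr1 in B *.
  have : 0 <= (k%:R + 1) * h by apply: mulr_ge0; lra.
  rewrite addrK in B.
  have hh2 : 0 <= h^+2 by exact: exprn_ge0 (ltW hh).
  nra.
have := ler_wpM2r (ltW hX) hY.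
by rewrite -mulrA (mulrC Y) XY mulr1.
Qed.

Lemma Pq_mono (q : R) k l : 0 <= q -> q < 1 -> (k <= l)%N -> Pq q l <= Pq q k.
Proof.
move=> h0 h1; elim: l => [|l IH] hkl.
  by have -> : k = 0%N by lia.
case: (ltnP k l.+1) => hk; last first.
  by have -> : k = l.+1 by lia.
apply: le_trans (IH _); last by lia.
rewrite /=.
have := @Pq_ge0 q l h0 h1.
have : 0 <= q^+l.+1 by exact: exprn_ge0.
move=> A B. have C : Pq q l * (1 - q^+l.+1) <= Pq q l by nra. exact: C.
Qed.

Lemma Pq_low (q : R) : 0 < q -> q < 1 ->
  exists c0, 0 < c0 /\ c0 <= 1 /\ forall k, c0 <= Pq q k.
Proof.
move=> h0 h1.
have he : 0 < (1 - q) / 2 by lra.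
have [J HJ] := @smallM q _ h0 h1 he.
have HJ1 := HJ J (leqnn J).
have hqJ : q^+J.+1 <= (1 - q) / 2.
  apply: le_trans HJ1.
  rewrite -[X in X <= _]mul1r; apply: ler_wpM2r; first exact: exprn_ge0 (ltW h0).
  by rewrite ler1n.
have PJ := @Pq_ge0 q J (ltW h0) h1.
have PJ1 : Pq q J <= 1 by have := @Pq_mono q 0 J (ltW h0) h1 (leq0n J).
exists (Pq q J / 2); split; first lra.
split; first lra.
move=> k.
case: (leqP k J) => hk.
  have := @Pq_mono q k J (ltW h0) h1 hk; lra.
have inv : forall d, Pq q J * (1 - q - q^+J.+1 + q^+(J + d).+1) <= Pq q (J + d) * (1 - q).
  elim => [|d IH].
    rewrite addn0; lra.
  rewrite addnS /=.
  set x := q^+(J + d).+1 in IH *.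
  have hx0 : 0 <= x by exact: exprn_ge0 (ltW h0).
  have hx1 : x <= q^+J.+1.
    rewrite /x -addSn exprD -[X in _ <= X]mulr1; apply: ler_wpM2l; first exact: exprn_ge0 (ltW h0).
    exact: exprn_ile1 (ltW h0) (ltW h1).
  have hx2 : 0 <= 1 - x by have := exprn_ile1 (J + d).+1 (ltW h0) (ltW h1); rewrite -/x; lra.
  have e : q^+(J + d).+2 = q * x by rewrite exprS.
  rewrite e.
  have := ler_wpM2r hx2 IH.
  have hx3 : 0 <= q^+J.+1 - x by rewrite subr_ge0.
  have A := mulr_ge0 (ltW PJ) (mulr_ge0 hx0 hx3).
  move=> B.
  have C : Pq q J * (1 - q - q ^+ J.+1 + q * x) <= Pq q J * (1 - q - q ^+ J.+1 + x) * (1 - x).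
    rewrite -subr_ge0.
    have -> : Pq q J * (1 - q - q ^+ J.+1 + x) * (1 - x) - Pq q J * (1 - q - q ^+ J.+1 + q * x)
      = Pq q J * (x * (q ^+ J.+1 - x)) by ring.
    exact: A.
  apply: (le_trans C); apply: (le_trans B).
  by rewrite mulrAC.
have := inv (k - J)%N.
have -> : (J + (k - J) = k)%N by lia.
have : 0 <= q^+k.+1 by exact: exprn_ge0 (ltW h0).
move=> A B; nra.
Qed.

End SJ.

Section SK.
Local Open Scope ring_scope.

Lemma binle m k : (k <= m)%N -> ('C(m.+1,k) <= k.+1 * 'C(m,k))%N.
Proof.
case: k => [|k] hk; first by rewrite !bin0.
rewrite binS.
have := mul_bin_left m k.
nia.
Qed.

Lemma w0 (q : R) n : wnk q n 0 = 1.
Proof. by rewrite /wnk /= !RealsE divr1 mulr1. Qed.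

Lemma tri k : Nat.div (Nat.mul (S k) (Nat.add (S k) 1)) 2 = Nat.add (Nat.div (Nat.mul k (Nat.add k 1)) 2) (S k).
Proof.
have -> : Nat.mul (S k) (Nat.add (S k) 1) = Nat.add (Nat.mul k (Nat.add k 1)) (Nat.mul (S k) 2) by lia.
by rewrite Nat.div_add.
Qed.

Lemma wS (q : R) n k : (0 < n)%N -> (k < n)%N ->
  n%:R * wnk q n k.+1 = (n - k)%:R * q^+k.+1 * wnk q n k.
Proof.
move=> hn hk.
rewrite /wnk tri pow_add. change (falling n k.+1) with (Rmult (falling n k) (INR n - INR k)). change (pow (INR n) k.+1) with (Rmult (INR n) (pow (INR n) k)).
rewrite !RealsE natrB; last by lia.
have hn0 : n%:R != 0 :> R by rewrite pnatr_eq0 -lt0n.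
have hnk : (n%:R ^+ k) != 0 :> R by rewrite expf_neq0.
field.
by rewrite hnk hn0.
Qed.

Lemma falling_ge0 n k : (k <= n)%N -> 0 <= falling n k.
Proof.
elim: k => [|k IH] hk /=; first by rewrite RealsE ler01.
rewrite !RealsE; apply: mulr_ge0; first by apply: IH; lia.
by rewrite subr_ge0 ler_nat; lia.
Qed.

Lemma wnk_ge0 (q : R) n k : 0 <= q -> (k <= n)%N -> 0 <= wnk q n k.
Proof.
move=> hq hk; rewrite /wnk !RealsE.
apply: mulr_ge0; last exact: exprn_ge0.
apply: divr_ge0; first exact: falling_ge0.
exact: exprn_ge0.
Qed.

End SK.

Section SM.
Local Open Scope ring_scope.

Lemma core (q : R) (c0 : R) (M n : nat) (nu : nat -> R) k :
  0 < q -> q < 1 -> 0 < c0 -> (forall k, c0 <= Pq q k) ->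
  (forall k, (M <= k)%N -> k.+1%:R * q^+k.+1 <= (1 - q) / 3) ->
  (0 < n)%N ->
  (forall j, (j <= n)%N -> 0 <= nu j) ->
  \sum_(0 <= j < n.+1) nu j = 1 ->
  (forall j, (j <= n)%N -> nu j = \sum_(0 <= k < n.+1) nu k * careless_P n q k j) ->
  (M <= k)%N -> (k <= n)%N ->
  wnk q n k / 2 <= nu k <= 3 / (2 * c0) * wnk q n k.
Proof.
move=> hq0 hq1 hc0 hP hM hn hpos hsum hst hMk hkn.
set F := Fm nu n.
set w := wnk q n.
have hF0 : F 0 = 1.
  rewrite /F /Fm -[RHS]hsum; by apply: eq_bigr => j _; rewrite bin0 mulr1.
have hFpos : forall m, 0 <= F m.
  move=> m; rewrite /F /Fm big_nat; apply: sumr_ge0 => i /andP[_ hi].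
  by apply: mulr_ge0 => //; apply: hpos; lia.
have hw0 : w 0 = 1 by exact: w0.
have hrec : forall m, (m < n)%N -> n%:R * F m.+1 = q^+m.+1 * ((n - m.+1)%:R * F m.+1 + (n-m)%:R * F m).
  by move=> m hm; exact: Frec.
have hwS : forall m, (m < n)%N -> n%:R * w m.+1 = (n-m)%:R * q^+m.+1 * w m.
  by move=> m hm; exact: wS.
have Hlow := @lowerF n q F w hn hq0 hq1 hF0 hFpos hw0 hrec hwS k hkn.
have Hup := @upperF n q F w hn hq0 hq1 hF0 hFpos hw0 hrec hwS k hkn.
have Hinv := @nu_inv nu n k hkn.
rewrite sum_shift in Hinv.
rewrite (_ : (n.+1 - k = (n - k).+1)%N) in Hinv; last by lia.
set t := fun i => ('C(i + k, k))%:R * F (i + k).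
have Ht : nu k = \sum_(0 <= i < (n - k).+1) (-1)^+i * t i.
  rewrite Hinv; apply: eq_bigr => i _; rewrite /t /F. have -> : (i + k)%R = (i + k)%N by []. rewrite addnK; ring.
have Ht0 : t 0 = F k by rewrite /t add0n binn mul1r.
have hcond : forall i, (i < n - k)%N -> 0 <= t i.+1 /\ 3 * t i.+1 <= t i.
  move=> i hi; split.
    by rewrite /t; apply: mulr_ge0.
  set m := (i + k)%N.
  have hm : (m < n)%N by rewrite /m; lia.
  have R1 := @ratioF n q F hn hq0 hq1 hFpos hrec m hm.
  have hb := @binle m k (leq_addl i k : (k <= m)%N).
  have hb' : ('C(m.+1, k))%:R <= k.+1%:R * ('C(m, k))%:R :> R.
    by rewrite -natrM ler_nat.
  have hqm : q^+m.+1 <= q^+k.+1.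
    rewrite (_ : m.+1 = (k.+1 + i)%N); last by rewrite /m; lia.
    rewrite exprD mulrC; apply: ler_piMl; first exact: exprn_ge0 (ltW hq0).
    exact: exprn_ile1 (ltW hq0) (ltW hq1).
  have HMk := hM k hMk.
  rewrite /t addSn -/m.
  have hFm1 := hFpos m.+1. have hFm := hFpos m.
  have hC : (0 <= ('C(m, k))%:R :> R) by [].
  have S1 : (1 - q) * (('C(m.+1, k))%:R * F m.+1) <= k.+1%:R * ('C(m, k))%:R * (q^+m.+1 * F m).
    have := ler_wpM2r hFm1 hb'.
    have := ler_wpM2l (mulr_ge0 (ler0n _ k.+1) hC) R1.
    move=> A1 A2.
    have h1q : 0 <= 1 - q by lra.
    have A3 := ler_wpM2l h1q A2.
    apply: le_trans A3 _.
    have -> : (1 - q) * (k.+1%:R * ('C(m, k))%:R * F m.+1) = k.+1%:R * ('C(m, k))%:R * ((1 - q) * F m.+1) by ring.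
    exact: A1.
  have S2 : k.+1%:R * ('C(m, k))%:R * (q^+m.+1 * F m) <= (k.+1%:R * q^+k.+1) * (('C(m, k))%:R * F m).
    have -> : k.+1%:R * ('C(m, k))%:R * (q^+m.+1 * F m) = (k.+1%:R * q^+m.+1) * (('C(m, k))%:R * F m) by ring.
    apply: ler_wpM2r; first exact: mulr_ge0.
    apply: ler_wpM2l => //.
  have S3 : (k.+1%:R * q^+k.+1) * (('C(m, k))%:R * F m) <= (1 - q) / 3 * (('C(m, k))%:R * F m).
    by apply: ler_wpM2r => //; exact: mulr_ge0.
  have S4 := le_trans S1 (le_trans S2 S3).
  have h1q : 0 < 1 - q by lra.
  have : (1 - q) * (3 * (('C(m.+1, k))%:R * F m.+1)) <= (1 - q) * (('C(m, k))%:R * F m).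
    have -> : (1 - q) * (3 * (('C(m.+1, k))%:R * F m.+1)) = 3 * ((1 - q) * (('C(m.+1, k))%:R * F m.+1)) by ring.
    have -> : (1 - q) * (('C(m, k))%:R * F m) = 3 * ((1 - q) / 3 * (('C(m, k))%:R * F m)) by field.
    apply: ler_wpM2l => //; lra.
  by rewrite ler_pM2l.
have Ht0' : 0 <= t 0 by rewrite Ht0.
have /andP[A1 A2] := @alt t (n - k) Ht0' hcond.
rewrite -Ht Ht0 in A1 A2.
have HP := hP k.
have hw : 0 <= w k by exact: wnk_ge0 (ltW hq0) hkn.
have hFk := hFpos k.
apply/andP; split.
  rewrite -/w. lra.
rewrite -/w.
have B1 : F k * c0 <= w k.
  apply: le_trans Hup; exact: ler_wpM2l.
have B2 : F k <= w k / c0 by rewrite ler_pdivlMr.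
have -> : 3 / (2 * c0) * w k = 3 / 2 * (w k / c0) by field; lra.
lra.
Qed.

End SM.

Section SN.
Local Open Scope ring_scope.

Lemma main_ring (p : R) : 0 < p -> p < 1 ->
  exists (c C0 : R) (M N : nat), 0 < c /\ c < C0 /\
    forall n : nat, (N <= n)%N ->
    forall nu : nat -> R, careless_stationary n (1 - p) nu ->
    forall k : nat, (M <= k)%N -> (k <= n)%N ->
      c * wnk (1 - p) n k <= nu k /\ nu k <= C0 * wnk (1 - p) n k.
Proof.
move=> hp0 hp1.
set q := 1 - p.
have hq0 : 0 < q by rewrite /q; lra.
have hq1 : q < 1 by rewrite /q; lra.
have [c0 [hc0 [hc01 hP]]] := @Pq_low q hq0 hq1.
have he : 0 < (1 - q) / 3 by lra.
have [M hM] := @smallM q _ hq0 hq1 he.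
exists (1/2), (3/(2*c0)), M, 1%N.
split; first lra.
split.
  rewrite -subr_gt0.
  have -> : 3/(2*c0) - 1/2 = (3 - c0)/(2*c0) by field; lra.
  apply: divr_gt0; lra.
move=> n hn nu [hpos [hsum hst]] k hMk hkn.
have hpos' : forall j, (j <= n)%N -> 0 <= nu j.
  by move=> j hj; apply/RleP; apply: hpos; apply/ssrnat.leP.
rewrite sum_f_R0E in hsum.
have hst' : forall j, (j <= n)%N -> nu j = \sum_(0 <= k < n.+1) nu k * careless_P n q k j.
  by move=> j hj; rewrite (hst j (ssrnat.leP hj)) sum_f_R0E.
have := @core q c0 M n nu k hq0 hq1 hc0 hP hM hn hpos' hsum hst' hMk hkn.
move=> /andP[A1 A2].
split; lra.
Qed.

End SN.

Lemma final_lemma (p : R) (hp0 : Rlt 0 p) (hp1 : Rlt p 1) :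
  exists (c C : R) (M N : nat),
    Rlt 0 c /\ Rlt c C /\
    forall n : nat, Peano.le N n ->
    forall nu : nat -> R, careless_stationary n (1 - p) nu ->
    forall k : nat, Peano.le M k -> Peano.le k n ->
      Rle (c * wnk (1 - p) n k) (nu k) /\ Rle (nu k) (C * wnk (1 - p) n k).
Proof.
have hp0' := introT RltP hp0.
have hp1' := introT RltP hp1.
have [c [C0 [M [N [h1 [h2 h3]]]]]] := @main_ring p hp0' hp1'.
exists c, C0, M, N.
split; first exact/RltP.
split; first exact/RltP.
move=> n hn nu hnu k hk hkn.
have [A B] := h3 n (introT ssrnat.leP hn) nu hnu k (introT ssrnat.leP hk) (introT ssrnat.leP hkn).
by split; apply/RleP.
Qed.

End Aux.

Open Scope R_scope.

Theorem mainTheorem10 (p : R) (hp0 : 0 < p) (hp1 : p < 1) :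
  exists (c C : R) (M N : nat),
    0 < c /\ c < C /\
    forall n : nat, (N <= n)%nat ->
    forall nu : nat -> R, careless_stationary n (1 - p) nu ->
    forall k : nat, (M <= k)%nat -> (k <= n)%nat ->
      c * wnk (1 - p) n k <= nu k <= C * wnk (1 - p) n k.
Proof.
  exact (Aux.final_lemma p hp0 hp1).
Qed.
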